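(* Let $p$ be a prime, $1\le e<p$, and define $f_n\in\mathbb{F}_p[c]$ by $f_1=c$ and $f_{n+1}=c^{p^n}-f_n^e$ for $n\ge1$. Then for all sufficiently large $n$ there is a nonzero prime ideal $\mathfrak{p}\subseteq\mathbb{F}_p[c]$ with $f_n\in\mathfrak{p}$ but $f_j\notin\mathfrak{p}$ for all $1\le j<n$. *)

(* Defs.v *)
From HB Require Import structures.
From mathcomp Require Import all_boot all_order all_algebra.
Set Implicit Arguments. Unset Strict Implicit. Unset Printing Implicit Defensive.
Import GRing.Theory.
Local Open Scope ring_scope.

(* fseq p e n = f_n in F_p[c] for n >= 1:  f_1 = c,  f_(m+1) = c^(p^m) - f_m^e.
   The value at index 0 is an irrelevant placeholder (0). *)
Fixpoint fseq (p e : nat) (n : nat) : {poly 'F_p} :=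
  match n with
  | 0 => 0
  | 1 => 'X
  | m.+1 => 'X ^+ (p ^ m)%N - (fseq p e m) ^+ e
  end.

(* S is a nonzero prime ideal of the commutative ring R (S is a decidable
   predicate; idealr_closed includes properness 1 \notin S). *)
Definition nonzero_prime_ideal (R : nzRingType) (S : {pred R}) : Prop :=
  [/\ idealr_closed S, prime_idealr_closed S & exists2 x, x \in S & x != 0].

(* Main.v *)
Require Import Defs.
From Stdlib Require Import Classical.
From HB Require Import structures.
From mathcomp Require Import all_boot all_order all_algebra.
From mathcomp Require Import zify.
Import GRing.Theory.
Set Implicit Arguments. Unset Strict Implicit.

Lemma expn_mono m n k : m <= n -> m ^ k <= n ^ k.
Proof. by case: k => [|k] h; rewrite ?expn0 // leq_exp2r. Qed.

Lemma bern x k : x ^ k * (x + k) <= x * (x + 1) ^ k.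
Proof.
elim: k => [|k IH]; first by rewrite !expn0; lia.
rewrite !expnS; move: IH; move: (x ^ k) ((x + 1) ^ k) => A B; nia.
Qed.

Lemma two_pow x k : 1 <= x -> x <= k -> 2 * x ^ k <= (x + 1) ^ k.
Proof.
move=> hx hk; have h := bern x x.
have h2 : 2 * x ^ x <= (x + 1) ^ x.
  move: h; move: (x ^ x) ((x + 1) ^ x) => A B; nia.
rewrite -(subnKC hk) !expnD mulnA.
by apply: leq_mul => //; apply: expn_mono; rewrite addn1.
Qed.

Lemma pow2 m : 6 <= m -> 8 * m + 8 <= 2 ^ m.
Proof.
elim: m => // m IH; rewrite leq_eqVlt => /orP [/eqP <- // | hm].
rewrite expnS; have := IH hm; lia.
Qed.

Lemma term_big p e r s : 2 <= p -> e <= p -> 2 <= r -> 2 <= s -> 14 <= r * s ->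
  4 * (r * s) * (e ^ ((r * s).-1 %/ r) * p ^ r.-1) <= p ^ (r * s).-1.
Proof.
move=> hp hep hr hs hn.
have hq : (r * s).-1 %/ r = s.-1.
  have -> : (r * s).-1 = s.-1 * r + r.-1 by rewrite -(prednK (ltnW hs)) /=; lia.
  by rewrite divnMDl ?divn_small ?addn0 //; lia.
rewrite hq; set m := r.-1 * s.-1.
have hm : 6 <= m by rewrite /m; nia.
have hn2 : 4 * (r * s) <= 2 ^ m.
  apply: leq_trans (pow2 hm); rewrite /m; nia.
have E : (r * s).-1 = s.-1 + r.-1 + m by rewrite /m; nia.
rewrite E !expnD.
have h1 : e ^ s.-1 <= p ^ s.-1 by exact: expn_mono.
have h2 : 2 ^ m <= p ^ m by exact: expn_mono.
move: h1 h2 hn2; move: (e ^ s.-1) (p ^ s.-1) (2 ^ m) (p ^ m) (p ^ r.-1) (4 * (r * s)) => A B C D X Y.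
move=> h1 h2 h3.
have h4 : Y <= D by lia.
have h5 : Y * A <= D * B by exact: leq_mul.
have h6 := leq_mul (leqnn X) h5.
move: h6; move: (Y * A) (D * B) => U V; nia.
Qed.

Lemma term_one p e n : 2 <= p -> e < p -> p <= n ->
  2 * e ^ n.-1 <= p ^ n.-1.
Proof.
move=> hp hep hn.
have := @two_pow p.-1 n.-1; rewrite addn1 prednK ?(ltnW hp) //.
move=> h; apply: leq_trans (h _ _); last 2 first.
- lia.
- lia.
rewrite leq_mul2l /=; apply: expn_mono; lia.
Qed.

Local Open Scope ring_scope.

Lemma fseqS p e m : (0 < m)%N -> fseq p e m.+1 = 'X ^+ (p ^ m)%N - fseq p e m ^+ e.
Proof. by case: m. Qed.

Lemma size_fseq p e n : prime p -> (e < p)%N -> (0 < n)%N ->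
  size (fseq p e n) = (p ^ n.-1).+1.
Proof.
move=> hp hep; elim: n => // -[|m] IH _; first by rewrite /= size_polyX.
rewrite fseqS // size_polyDl ?size_polyXn // size_polyN.
apply: (leq_ltn_trans (size_poly_exp_leq _ _)); rewrite IH //= ltnS.
rewrite expnS mulnC ltn_pmul2r ?expn_gt0 ?prime_gt0 //.
Qed.

Lemma fseq_neq0 p e n : prime p -> (e < p)%N -> (0 < n)%N -> fseq p e n != 0.
Proof. by move=> hp hep hn; rewrite -size_poly_gt0 size_fseq. Qed.

Lemma pcharP p : prime p -> p \in [pchar {poly 'F_p}].
Proof. by move=> hp; rewrite pchar_poly pchar_Fp. Qed.

Lemma frobB p j (a b : {poly 'F_p}) : prime p ->
  (a - b) ^+ (p ^ j)%N = a ^+ (p ^ j)%N - b ^+ (p ^ j)%N.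
Proof.
move=> hp; have hn : ([pchar {poly 'F_p}]).-nat (p ^ j)%N.
  by rewrite (eq_pnat _ (pcharf_eq (pcharP hp))) pnatX pnat_id ?orbT.
by rewrite exprDn_pchar // exprNn_pchar.
Qed.


Lemma fseq_cong p e j k : prime p -> (0 < e)%N -> (0 < j)%N -> (0 < k)%N ->
  fseq p e j %| fseq p e (j + k) - fseq p e k ^+ (p ^ j)%N.
Proof.
move=> hp he hj; elim: k => // -[|k] IH _.
  rewrite addn1 fseqS //= addrAC subrr add0r dvdpNr.
  by rewrite dvdp_exp ?dvdpp.
rewrite addnS (@fseqS p e (j + k.+1)) ?addn_gt0 ?hj // (@fseqS p e k.+1) //.
rewrite frobB // -!exprM -expnD (addnC k.+1 j).
rewrite opprB addrC addrA subrK mulnC exprM.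
rewrite -opprB dvdpNr subrXX dvdp_mulr //; exact: IH.
Qed.


Section Irr.
Variable F : fieldType.
Implicit Types (x y q f X Y : {poly F}).

Lemma irr_coprime q x : irreducible_poly q -> ~~ (q %| x) -> coprimep q x.
Proof.
move=> hq hx; case: (irredp_XsubCP hq (dvdp_gcdl q x)) => h.
  by rewrite coprimep_def (eqp_size h) size_poly1.
by move: hx; rewrite -(eqp_dvdl _ h) dvdp_gcdr.
Qed.

Lemma irr_prime q x y : irreducible_poly q -> q %| x * y -> (q %| x) || (q %| y).
Proof.
move=> hq; case: (boolP (q %| x)) => //= hx.
by rewrite Gauss_dvdpr // irr_coprime.
Qed.

Lemma irr_size q : irreducible_poly q -> (1 < size q)%N.
Proof. by case. Qed.

Lemma irr_neq0 q : irreducible_poly q -> q != 0.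
Proof. exact: irredp_neq0. Qed.

Lemma val_mul0 q : irreducible_poly q -> forall t X Y,
  ~~ (q %| X) -> ~~ (q ^+ t.+1 %| Y) -> ~~ (q ^+ t.+1 %| X * Y).
Proof.
move=> hq; have q0 := irr_neq0 hq; elim=> [|t IH] X Y hX.
  rewrite !expr1 => hY; apply/negP => /(irr_prime hq); by rewrite (negPf hX) (negPf hY).
case: (boolP (q %| Y)) => hqY hY.
  case/dvdpP: hqY => Y1 EY; move: hY; rewrite EY.
  rewrite (exprSr q t.+1) dvdp_mul2r // => hY1.
  by rewrite mulrA dvdp_mul2r // IH.
apply/negP => h.
have : q %| X * Y by apply: dvdp_trans h; rewrite -{1}(expr1 q) dvdp_exp2l.
by move/(irr_prime hq); rewrite (negPf hX) (negPf hqY).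
Qed.

Lemma val_mul q : irreducible_poly q -> forall s t X Y,
  ~~ (q ^+ s.+1 %| X) -> ~~ (q ^+ t.+1 %| Y) -> ~~ (q ^+ (s + t).+1 %| X * Y).
Proof.
move=> hq; have q0 := irr_neq0 hq; elim=> [|s IH] t X Y.
  by rewrite expr1 add0n; exact: val_mul0.
case: (boolP (q %| X)) => hqX hX hY.
  case/dvdpP: hqX => X1 EX; move: hX; rewrite EX.
  rewrite (exprSr q s.+1) dvdp_mul2r // => hX1.
  by rewrite mulrAC addSn (exprSr q (s + t).+1) dvdp_mul2r // IH.
apply/negP => h; move: (val_mul0 hq hqX hY) => /negP; apply.
by apply: dvdp_trans h; rewrite dvdp_exp2l // !ltnS leq_addl.
Qed.

Lemma val_exp q s X : irreducible_poly q -> ~~ (q ^+ s.+1 %| X) ->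
  forall m, ~~ (q ^+ (s * m).+1 %| X ^+ m).
Proof.
move=> hq hX; elim=> [|m IH].
  by rewrite muln0 expr0 expr1 dvdp1 neq_ltn (irr_size hq) orbT.
rewrite (exprS X) mulnS; exact: (val_mul hq hX IH).
Qed.

Lemma deriv_dvd q a f : q ^+ a.+1 %| f -> q ^+ a %| f^`().
Proof.
case/dvdpP => g ->; rewrite derivM deriv_exp /= dvdp_add //.
  by apply: dvdp_mull; rewrite dvdp_exp2l.
apply: dvdp_mull; rewrite -mulr_natl; apply: dvdp_mull; apply: dvdp_mull; exact: dvdpp.
Qed.

Lemma irr_expX q x m : irreducible_poly q -> q %| x ^+ m -> q %| x.
Proof.
move=> hq; elim: m => [|m IH]; first by rewrite expr0 dvdp1 (gtn_eqF (irr_size hq)).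
by rewrite exprS => /(irr_prime hq) /orP [] // /IH.
Qed.

End Irr.


Lemma deriv_fseqS p e j : prime p -> (0 < j)%N ->
  (fseq p e j.+1)^`() = - ((fseq p e j)^`() * fseq p e j ^+ e.-1 *+ e).
Proof.
move=> hp hj; rewrite fseqS // derivB derivXn deriv_exp -mulr_natr natrX.
by rewrite (pcharf0 (pcharP hp)) expr0n (gtn_eqF hj) mulr0 sub0r.
Qed.

Lemma natr_Fp_neq0 p e : prime p -> (0 < e)%N -> (e < p)%N -> (e%:R : 'F_p) != 0.
Proof.
move=> hp he hep; rewrite -(dvdn_pcharf (pchar_Fp hp)).
by apply/negP => /dvdn_leq => /(_ he); rewrite leqNgt hep.
Qed.

Definition cnt p e (q : {poly 'F_p}) j := count (fun i => q %| fseq p e i) (iota 1 j.-1).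

Lemma val_fseq p e (q : {poly 'F_p}) : prime p -> (0 < e)%N -> (e < p)%N ->
  irreducible_poly q -> forall j, (0 < j)%N ->
  ~~ (q ^+ (expn e (cnt e q j)).+1 %| fseq p e j) /\ ~~ (q ^+ (expn e (cnt e q j)) %| (fseq p e j)^`()).
Proof.
move=> hp he hep hq; elim=> // -[|j] IH _.
  rewrite /cnt /= expn0 derivX expr1 dvdp1 (gtn_eqF (irr_size hq)); split => //.
  apply/negP => /dvdp_leq; rewrite polyX_eq0 size_polyX => /(_ isT).
  move=> h; have h2 := size_exp q 2; have h3 := irr_size hq.
  move: h h2 h3; move: (size (q ^+ 2)) (size q) => a b; rewrite /=; lia.
have [IH1 IH2] := IH isT.
set D := expn e (cnt e q j.+1).
have hc : cnt e q j.+2 = addn (cnt e q j.+1) (dvdp q (fseq p e j.+1)).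
  have Ei : iota 1 j.+1 = iota 1 j ++ [:: j.+1].
   by rewrite -(addn1 j) iotaD add1n addn1.
  by rewrite /cnt !succnK Ei count_cat /= addn0.
have hD : (0 < D)%N by rewrite expn_gt0 he.
set b := if q %| fseq p e j.+1 then D else 0%N.
have h1 : ~~ (q ^+ b.+1 %| fseq p e j.+1).
  by rewrite /b; case: ifP => // /negbT; rewrite expr1.
have h2 := val_exp hq h1 e.-1.
have h3 : ~~ (q ^+ (D.-1).+1 %| (fseq p e j.+1)^`()) by rewrite prednK.
have h4 := val_mul hq h3 h2.
have hE : (D.-1 + b * e.-1).+1 = expn e (cnt e q j.+2).
  rewrite hc expnD -/D /b; case: ifP => _ /=; rewrite ?expn1 ?expn0; nia.
have h5 : ~~ (q ^+ expn e (cnt e q j.+2) %| (fseq p e j.+2)^`()).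
  rewrite deriv_fseqS // dvdpNr -mulr_natl -polyC_natr mul_polyC dvdpZr ?natr_Fp_neq0 //.
  by rewrite -hE.
split => //; apply/negP => /deriv_dvd; exact/negP.
Qed.


Lemma count_dvd r m : (0 < r)%N -> count (dvdn r) (iota 1 m) = (m %/ r)%N.
Proof.
move=> hr; elim: m => [|m IH]; first by rewrite div0n.
have Ei : iota 1 m.+1 = iota 1 m ++ [:: m.+1] by rewrite -(addn1 m) iotaD add1n addn1.
by rewrite Ei count_cat IH /= addn0 (divnS _ hr) addnC.
Qed.

Lemma shift_dvd p e (q : {poly 'F_p}) k i : prime p -> (0 < e)%N ->
  irreducible_poly q -> (0 < k)%N -> (0 < i)%N -> q %| fseq p e k ->
  (q %| fseq p e (k + i)) = (q %| fseq p e i).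
Proof.
move=> hp he hq hk hi hqk.
have hd : q %| fseq p e (k + i) - fseq p e i ^+ (p ^ k)%N.
  exact: dvdp_trans hqk (fseq_cong hp he hk hi).
have -> : fseq p e (k + i) = (fseq p e (k + i) - fseq p e i ^+ (p ^ k)%N) + fseq p e i ^+ (p ^ k)%N.
  by rewrite subrK.
rewrite dvdp_addr //; apply/idP/idP; first exact: irr_expX.
by move=> h; apply: dvdp_exp => //; rewrite expn_gt0 prime_gt0.
Qed.

Lemma rank_prop p e (q : {poly 'F_p}) n : prime p -> (0 < e)%N ->
  irreducible_poly q -> (0 < n)%N -> q %| fseq p e n ->
  exists2 r, (0 < r)%N & forall i, (0 < i)%N -> (q %| fseq p e i) = (r %| i)%N.
Proof.
move=> hp he hq hn hqn.
have ex : exists i, (0 < i)%N && (q %| fseq p e i) by exists n; rewrite hn.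
case: (ex_minnP ex) => r /andP[r0 qr] rmin; exists r => //.
elim/ltn_ind => i IH hi.
case: (ltngtP i r) => hir.
- have -> : (r %| i)%N = false by apply/negP => /(dvdn_leq hi); rewrite leqNgt hir.
  by apply/negP => h; have := rmin i; rewrite hi h => /(_ isT); rewrite leqNgt hir.
- have Ei : i = (r + (i - r))%N by rewrite subnKC // ltnW.
  rewrite Ei shift_dvd ?subn_gt0 // IH ?subn_gt0 //; first by rewrite dvdn_addr ?dvdnn.
  lia.
- by rewrite hir qr dvdnn.
Qed.

Lemma cnt_rank p e (q : {poly 'F_p}) r n :
  (0 < r)%N -> (forall i, (0 < i)%N -> (q %| fseq p e i) = (r %| i)%N) ->
  cnt e q n = (n.-1 %/ r)%N.
Proof.
move=> hr H; rewrite /cnt -count_dvd //; apply: eq_in_count => i.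
by rewrite mem_iota => /andP[hi _]; rewrite H.
Qed.


Section Fact.
Variable F : fieldType.

Lemma irr_factor (g : {poly F}) : (1 < size g)%N ->
  exists2 q, irreducible_poly q & q %| g.
Proof.
move: {2}(size g).+1 (ltnSn (size g)) => n; elim: n g => // n IH g hn hg.
case: (classic (irreducible_poly g)) => [hi|hni]; first by exists g.
have : ~ (forall q : {poly F}, size q != 1 -> q %| g -> q %= g) by move=> H; apply: hni.
move/not_all_ex_not => [q Hq].
have [hq1 Hq2] := imply_to_and _ _ Hq.
have [hqg hnq] := imply_to_and _ _ Hq2.
have g0 : g != 0 by rewrite -size_poly_gt0 ltnW.
have q0 : q != 0 := dvdpN0 hqg g0.
have hlt : (size q < size g)%N.
  rewrite ltn_neqAle dvdp_leq // andbT dvdp_size_eqp //; exact/negP.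
have hq : (1 < size q)%N by move: hq1 q0; rewrite -size_poly_gt0; case: (size q) => [|[]].
have [r hr hrq] := IH q (leq_trans hlt (ltnSE hn)) hq.
by exists r => //; apply: dvdp_trans hrq hqg.
Qed.

Lemma irr_dich (s q : {poly F}) : irreducible_poly s -> irreducible_poly q ->
  s %= q \/ coprimep s q.
Proof.
move=> hs hq; case: (boolP (s %| q)) => h.
  by left; apply: hq => //; rewrite gtn_eqF // irr_size.
by right; apply: irr_coprime.
Qed.

Lemma dvd_of_local (g H : {poly F}) : g != 0 -> H != 0 ->
  (forall q, irreducible_poly q -> forall a, q ^+ a %| g -> q ^+ a %| H) -> g %| H.
Proof.
move: {2}(size g).+1 (ltnSn (size g)) => n; elim: n g H => // n IH g H hn g0 H0 hloc.
case: (leqP (size g) 1) => hs.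
  have : size g == 1%N by rewrite eqn_leq hs size_poly_gt0.
  by rewrite size_poly_eq1 => /eqp_dvdl ->; rewrite dvd1p.
have [q hq hqg] := irr_factor hs.
have q0 := irr_neq0 hq.
case/dvdpP: (hqg) => g1 Eg.
have : q %| H by rewrite -(expr1 q); apply: hloc; rewrite ?expr1.
case/dvdpP => H1 EH.
have g10 : g1 != 0 by apply: contraNneq g0; rewrite Eg => ->; rewrite mul0r.
have H10 : H1 != 0 by apply: contraNneq H0; rewrite EH => ->; rewrite mul0r.
rewrite Eg EH; apply: dvdp_mul; last exact: dvdpp.
apply: IH => //.
  move: hn; rewrite Eg size_mul //; have := irr_size hq.
  case: (size q) => [|[|k]] // _; rewrite !addnS /= !ltnS => h.
  exact: leq_ltn_trans (leq_addr _ _) h.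
move=> s hs0 a hsa.
case: (irr_dich hs0 hq) => hsq.
- have h1 : s ^+ a.+1 %| g.
    by rewrite Eg exprSr; apply: dvdp_mul => //; rewrite (eqp_dvdl _ hsq) dvdpp.
  move: (hloc s hs0 _ h1); rewrite EH exprSr.
  have hqs : q %= s by rewrite eqp_sym.
  rewrite (eqp_dvdr _ (eqp_mull H1 hqs)) dvdp_mul2r //; exact: irr_neq0.
- have h1 : s ^+ a %| g by rewrite Eg; apply: dvdp_mulr.
  move: (hloc s hs0 _ h1); rewrite EH Gauss_dvdpl //; exact: coprimep_expl.
Qed.

End Fact.


Lemma prim_exists p e n : prime p -> (0 < e)%N -> (e < p)%N -> (14 + p <= n)%N ->
  exists q : {poly 'F_p}, [/\ irreducible_poly q, q %| fseq p e n &
    forall j, (0 < j)%N -> (j < n)%N -> ~~ (q %| fseq p e j)].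
Proof.
move=> hp he hep hn.
have n0 : (0 < n)%N by lia.
apply: NNPP => Hno.
have Hold : forall q : {poly 'F_p}, irreducible_poly q -> q %| fseq p e n ->
    exists j, [/\ (0 < j)%N, (j < n)%N & q %| fseq p e j].
  move=> q hq hqn; apply: NNPP => Hj; apply: Hno; exists q; split => // j hj hjn.
  by apply/negP => hqj; apply: Hj; exists j.
pose P := fun r : 'I_n => (0 < r)%N && (r %| n)%N.
pose Fr := fun r : 'I_n => fseq p e r ^+ (e ^ (n.-1 %/ r))%N.
pose H := \prod_(r | P r) Fr r.
have H0 : H != 0.
  apply/prodf_neq0 => r /andP[r0 _]; rewrite expf_neq0 //; exact: fseq_neq0.
have hdiv : fseq p e n %| H.
  apply: dvd_of_local => //; first exact: fseq_neq0.
  move=> q hq [|a] hqa; first by rewrite expr0 dvd1p.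
  have hqn : q %| fseq p e n.
    by apply: dvdp_trans hqa; rewrite -{1}(expr1 q) dvdp_exp2l.
  have [r r0 Hr] := rank_prop hp he hq n0 hqn.
  have rn : (r %| n)%N by rewrite -Hr.
  have [j [j0 jn hqj]] := Hold q hq hqn.
  have rltn : (r < n)%N.
    have : (r %| j)%N by rewrite -Hr.
    by move/(dvdn_leq j0) => h; apply: leq_ltn_trans h jn.
  have [hv _] := val_fseq hp he hep hq n0.
  rewrite (@cnt_rank p e q r n r0 Hr) in hv.
  have ha : (a.+1 <= e ^ (n.-1 %/ r))%N.
    rewrite leqNgt; apply/negP => hlt; move/negP: hv; apply.
    by apply: dvdp_trans hqa; rewrite dvdp_exp2l.
  apply: (@dvdp_trans _ (Fr (Ordinal rltn))).
    apply: dvdp_trans (dvdp_exp2l q ha) _; apply: dvdp_exp2r; rewrite Hr //.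
  rewrite /H (bigD1 (Ordinal rltn)) /=; last by rewrite /P r0 rn.
  exact: dvdp_mulr.
have hsz := dvdp_leq H0 hdiv; rewrite size_fseq // in hsz.
have hH := size_poly_prod_leq P Fr.
pose T := fun r : 'I_n => (e ^ (n.-1 %/ r) * p ^ r.-1)%N.
have hF : forall r, P r -> size (Fr r) = (T r).+1.
  move=> r /andP[r0 _].
  have := size_exp (fseq p e r) (e ^ (n.-1 %/ r))%N; rewrite size_fseq //= => h.
  rewrite -[size _]prednK; last by rewrite size_poly_gt0 expf_neq0 // fseq_neq0.
  by rewrite /Fr h mulnC.
have hsum : (\sum_(r | P r) size (Fr r) = \sum_(r | P r) T r + #|P|)%N.
  rewrite (eq_bigr (fun r => T r + 1)%N); last by move=> r hr; rewrite hF // addn1.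
  by rewrite big_split /= sum1_card.
rewrite hsum -/H in hH.
have hmain : (p ^ n.-1 <= \sum_(r | P r) T r)%N.
  move: hsz hH; move: (size H) (\sum_(r | P r) T r) (#|P|) => x y z; lia.
have i1 : (1 < n)%N by lia.
have hp2 : (2 <= p)%N := prime_gt1 hp.
rewrite (bigD1 (Ordinal i1)) /= in hmain; last by rewrite /P /= dvd1n.
set rest := (\sum_(r | P r && (r != Ordinal i1)) T r)%N in hmain.
have h1 : (2 * T (Ordinal i1) <= p ^ n.-1)%N.
  rewrite /T /= divn1 expn0 muln1; apply: term_one => //; lia.
have h2 : (4 * n * rest <= n * p ^ n.-1)%N.
  rewrite /rest big_distrr /=.
  apply: (@leq_trans (\sum_(r < n) p ^ n.-1)%N).
    rewrite [X in (_ <= X)%N](bigID (fun r => P r && (r != Ordinal i1))) /=.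
    apply: leq_trans (leq_addr _ _); apply: leq_sum => r /andP[/andP[r0 rn] r1].
    have r2 : (2 <= r)%N.
      by move: r1 r0; rewrite -val_eqE /=; case: (nat_of_ord r) => [|[|k]].
    have En : n = (r * (n %/ r))%N by rewrite mulnC divnK.
    have s2 : (2 <= (n %/ r)%N)%N.
      have := ltn_ord r; rewrite [X in (_ < X)%N -> _]En.
      case: (n %/ r)%N => [|[|k]] //; rewrite ?muln0 ?muln1 ?ltnn //.
    have h14 : (14 <= r * (n %/ r))%N by rewrite -En; lia.
    have := term_big hp2 (ltnW hep) r2 s2 h14; rewrite -En; exact.
  by rewrite sum_nat_const card_ord.
have h3 : (4 * rest <= p ^ n.-1)%N by move: h2; rewrite [(4 * n)%N]mulnC -mulnA leq_pmul2l.
have hP : (0 < p ^ n.-1)%N by rewrite expn_gt0 prime_gt0.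
clear h2; move: hmain h1 h3 hP; move: (p ^ n.-1)%N (T (Ordinal i1)) rest => x y z; lia.
Qed.


Unset Implicit Arguments.
Unset Strict Implicit.

Theorem lemma5p4 (p e : nat) (hp : prime p) (he1 : (1 <= e)%N) (hep : (e < p)%N) :
  exists N : nat, forall n : nat, (N <= n)%N ->
    exists S : {pred {poly 'F_p}},
      nonzero_prime_ideal S /\ fseq p e n \in S /\
      (forall j : nat, (1 <= j)%N -> (j < n)%N -> fseq p e j \notin S).
Proof.
exists (14 + p)%N => n hn.
have [q [hq hqn hj]] := prim_exists hp he1 hep hn.
exists (fun x : {poly 'F_p} => q %| x); split; last first.
  split; first by rewrite unfold_in.
  by move=> j h1 h2; rewrite unfold_in; exact: hj.
split.
- split; first by rewrite unfold_in dvdp0.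
  + by rewrite unfold_in dvdp1 gtn_eqF // irr_size.
  + move=> a u v; rewrite !unfold_in => hu hv; apply: dvdp_add => //; exact: dvdp_mull.
- by move=> u v; rewrite !unfold_in; exact: irr_prime hq.
- by exists q; [rewrite unfold_in dvdpp | exact: irr_neq0].
Qed.
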